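(* Let $G$ be a finitely generated group which is either a free product $G=H*_F K$ of finitely generated groups $H$ and $K$ amalgamating finite subgroups of $H$ and $K$, or an HNN extension with finitely generated base group $H$ and two finite associated subgroups of $H$. Then there is a finite generating set $S_H$ of $H$, closed under inverses, and a finite generating set $S_G\supseteq S_H$ of $G$, closed under inverses, such that $d_H(h_1,h_2)=d_G(h_1,h_2)$ for all $h_1,h_2\in H$, where $d_H$ and $d_G$ are the word metrics with respect to $S_H$ and $S_G$ respectively.
   Context: For a group $X$ with finite generating set $T$ closed under inverses, the word metric is $d(x,x')$ = length of a shortest word in $T$ representing $x^{-1}x'$. *)

(* Defs.v *)
From Stdlib Require Import List Arith.
Import ListNotations.

Record group := Group {
  gcar :> Type;
  gmul : gcar -> gcar -> gcar;
  ginv : gcar -> gcar;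
  gone : gcar;
  gmulA : forall x y z, gmul x (gmul y z) = gmul (gmul x y) z;
  gmul1l : forall x, gmul gone x = x;
  gmul1r : forall x, gmul x gone = x;
  gmulVl : forall x, gmul (ginv x) x = gone;
  gmulVr : forall x, gmul x (ginv x) = gone
}.
Arguments gmul {g}. Arguments ginv {g}. Arguments gone {g}.

Definition is_hom {G L : group} (f : G -> L) : Prop :=
  forall x y : G, f (gmul x y) = gmul (f x) (f y).

Definition injective {A B : Type} (f : A -> B) : Prop :=
  forall x y, f x = f y -> x = y.

Definition wprod {G : group} (w : list G) : G := fold_right gmul gone w.

Definition word_in {G : group} (S : list G) (w : list G) : Prop :=
  forall x, In x w -> In x S.

Definition gen_set (G : group) (S : list G) : Prop :=
  (forall s, In s S -> In (ginv s) S) /\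
  (forall g : G, exists w, word_in S w /\ wprod w = g).

Definition finitely_generated (G : group) : Prop :=
  exists S : list G, forall g : G, exists w, word_in S w /\ wprod w = g.

Definition finite_group (G : group) : Prop :=
  exists l : list G, forall g : G, In g l.

Definition word_dist (G : group) (S : list G) (x y : G) (n : nat) : Prop :=
  (exists w, word_in S w /\ wprod w = gmul (ginv x) y /\ length w = n) /\
  (forall w, word_in S w -> wprod w = gmul (ginv x) y -> n <= length w).

(* G is the free product of H and K amalgamating F, where a : F -> H and
   b : F -> K are the injective inclusions: (G, i, j) is the pushout of
   H <- F -> K in the category of groups. *)
Definition is_amalgam (G H K F : group) (i : H -> G) (j : K -> G)
    (a : F -> H) (b : F -> K) : Prop :=
  is_hom i /\ is_hom j /\ (forall f : F, i (a f) = j (b f)) /\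
  forall (L : group) (p : H -> L) (q : K -> L),
    is_hom p -> is_hom q -> (forall f : F, p (a f) = q (b f)) ->
    (exists g : G -> L, is_hom g /\ (forall h, g (i h) = p h) /\
                        (forall k, g (j k) = q k)) /\
    (forall g1 g2 : G -> L, is_hom g1 -> is_hom g2 ->
       (forall h, g1 (i h) = p h) -> (forall k, g1 (j k) = q k) ->
       (forall h, g2 (i h) = p h) -> (forall k, g2 (j k) = q k) ->
       forall x, g1 x = g2 x).

(* G is the HNN extension of H with associated subgroups a(F), b(F)
   (a, b : F -> H injective, identified via b o a^-1) and stable letter t:
   G = < H, t | t a(f) t^-1 = b(f) >, stated by its universal property. *)
Definition is_HNN (G H F : group) (i : H -> G) (t : G)
    (a b : F -> H) : Prop :=
  is_hom i /\ (forall f : F, gmul (gmul t (i (a f))) (ginv t) = i (b f)) /\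
  forall (L : group) (p : H -> L) (s : L),
    is_hom p -> (forall f : F, gmul (gmul s (p (a f))) (ginv s) = p (b f)) ->
    (exists g : G -> L, is_hom g /\ (forall h, g (i h) = p h) /\ g t = s) /\
    (forall g1 g2 : G -> L, is_hom g1 -> is_hom g2 ->
       (forall h, g1 (i h) = p h) -> g1 t = s ->
       (forall h, g2 (i h) = p h) -> g2 t = s ->
       forall x, g1 x = g2 x).

(* Main.v *)
Require Import Defs.
From Stdlib Require Import List Arith Lia Bool Wf_nat.
From Stdlib Require Import ClassicalEpsilon FunctionalExtensionality ProofIrrelevance PropExtensionality.
Import ListNotations.


Lemma mul_cancel_l (G : group) (x y z : G) : gmul x y = gmul x z -> y = z.
Proof. intro E. rewrite <- (gmul1l _ y), <- (gmul1l _ z), <- (gmulVl _ x), <- !gmulA, E. reflexivity. Qed.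
Lemma mul_cancel_r (G : group) (x y z : G) : gmul y x = gmul z x -> y = z.
Proof. intro E. rewrite <- (gmul1r _ y), <- (gmul1r _ z), <- (gmulVr _ x), !gmulA, E. reflexivity. Qed.
Lemma inv_unique (G : group) (x y : G) : gmul x y = gone -> ginv x = y.
Proof. intro E. apply (mul_cancel_l _ x). rewrite gmulVr; auto. Qed.
Lemma inv_inv (G : group) (x : G) : ginv (ginv x) = x.
Proof. apply inv_unique. apply gmulVl. Qed.
Lemma inv_mul (G : group) (x y : G) : ginv (gmul x y) = gmul (ginv y) (ginv x).
Proof. apply inv_unique. rewrite gmulA, <- (gmulA _ x y), gmulVr, gmul1r, gmulVr. reflexivity. Qed.
Lemma inv_one (G : group) : ginv (@gone G) = gone.
Proof. apply inv_unique; apply gmul1l. Qed.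
Lemma hom_one (G L : group) (f : G -> L) : is_hom f -> f gone = gone.
Proof. intro Hf. apply (mul_cancel_l _ (f gone)). rewrite <- Hf, !gmul1r. reflexivity. Qed.
Lemma hom_inv (G L : group) (f : G -> L) : is_hom f -> forall x, f (ginv x) = ginv (f x).
Proof. intros Hf x. symmetry. apply inv_unique. rewrite <- Hf, gmulVr. apply hom_one; auto. Qed.

Lemma wprod_app (G : group) (w1 w2 : list G) : wprod (w1 ++ w2) = gmul (wprod w1) (wprod w2).
Proof. induction w1; simpl. rewrite gmul1l; auto. rewrite IHw1, gmulA; auto. Qed.
Lemma wprod_map (G L : group) (f : G -> L) (w : list G) : is_hom f -> wprod (map f w) = f (wprod w).
Proof. intro Hf. induction w; simpl. symmetry; apply hom_one; auto. rewrite IHw, Hf; auto. Qed.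

Record perm (X : Type) := Perm { pf : X -> X; pg : X -> X;
  pfg : forall x, pf (pg x) = x; pgf : forall x, pg (pf x) = x }.
Arguments Perm {X}. Arguments pf {X}. Arguments pg {X}. Arguments pfg {X}. Arguments pgf {X}.

Lemma perm_ext (X : Type) (p q : perm X) : (forall x, pf p x = pf q x) -> p = q.
Proof.
  destruct p as [f g Hfg Hgf], q as [f' g' Hfg' Hgf']; simpl; intro E.
  assert (f = f') by (apply functional_extensionality; auto). subst f'.
  assert (g = g').
  { apply functional_extensionality; intro x.
    transitivity (g (f (g' x))). rewrite Hfg'; auto. apply Hgf. }
  subst g'. f_equal; apply proof_irrelevance.
Qed.

Definition pcomp {X} (p q : perm X) : perm X.
Proof.
  refine (Perm (fun x => pf p (pf q x)) (fun x => pg q (pg p x)) _ _); intro x.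
  rewrite pfg, pfg; auto. rewrite pgf, pgf; auto.
Defined.
Definition pinv {X} (p : perm X) : perm X := Perm (pg p) (pf p) (pgf p) (pfg p).
Definition pid {X} : perm X := Perm (fun x => x) (fun x => x) (fun _ => eq_refl) (fun _ => eq_refl).

Definition perm_group (X : Type) : group.
Proof.
  refine (@Group (perm X) pcomp pinv pid _ _ _ _ _); intros; apply perm_ext; intros; simpl; auto.
  apply pgf. apply pfg.
Defined.

Definition act_perm (G : group) (X : Type) (act : G -> X -> X)
  (H1 : forall x, act gone x = x) (HM : forall g h x, act (gmul g h) x = act g (act h x))
  (g : G) : perm_group X.
Proof.
  refine (Perm (act g) (act (ginv g)) _ _); intro x; rewrite <- HM;
  [rewrite gmulVr | rewrite gmulVl]; apply H1.
Defined.

Lemma act_perm_hom (G : group) (X : Type) (act : G -> X -> X) H1 HM :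
  is_hom (@act_perm G X act H1 HM).
Proof. intros x y. apply perm_ext. intro z. simpl. apply HM. Qed.

Definition dec (P : Prop) : bool := if excluded_middle_informative P then true else false.
Lemma decT (P : Prop) : P -> dec P = true.
Proof. unfold dec; destruct excluded_middle_informative; tauto. Qed.
Lemma decF (P : Prop) : ~ P -> dec P = false.
Proof. unfold dec; destruct excluded_middle_informative; tauto. Qed.
Lemma decP (P : Prop) : (dec P = true /\ P) \/ (dec P = false /\ ~ P).
Proof. unfold dec; destruct excluded_middle_informative; tauto. Qed.

Definition inA {F H : group} (a : F -> H) (h : H) : Prop := exists f, a f = h.
Definition sameA {F H : group} (a : F -> H) (r h : H) : Prop := exists f, r = gmul (a f) h.
Definition tau {F H : group} (a : F -> H) (h : H) : H :=
  if dec (inA a h) then gone else epsilon (inhabits h) (fun r => sameA a r h).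
Definition phi {F H : group} (a : F -> H) (h : H) : F :=
  epsilon (inhabits gone) (fun f => h = gmul (a f) (tau a h)).

Definition ginj {F H : group} (a : F -> H) := is_hom a /\ injective a.

Lemma sameA_sym {F H : group} (a : F -> H) r h : ginj a -> sameA a r h -> sameA a h r.
Proof.
  intros [Ha _] [f ->]. exists (ginv f). rewrite gmulA, <- Ha, gmulVl, hom_one, gmul1l; auto.
Qed.
Lemma sameA_trans {F H : group} (a : F -> H) x y z : ginj a -> sameA a x y -> sameA a y z -> sameA a x z.
Proof. intros [Ha _] [f ->] [g ->]. exists (gmul f g). rewrite Ha, gmulA; auto. Qed.
Lemma inA_same {F H : group} (a : F -> H) x y : ginj a -> sameA a x y -> inA a y -> inA a x.
Proof. intros [Ha _] [f ->] [g <-]. exists (gmul f g). auto. Qed.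

Lemma tau_same {F H : group} (a : F -> H) h : ginj a -> sameA a (tau a h) h.
Proof.
  intros Hj. unfold tau. destruct (decP (inA a h)) as [[-> [f <-]]|[-> _]].
  - apply sameA_sym; auto. exists f. rewrite gmul1r; auto.
  - apply epsilon_spec. exists h, gone. rewrite (hom_one _ _ a), gmul1l; auto. apply Hj.
Qed.

Lemma tau_congr {F H : group} (a : F -> H) x y : ginj a -> sameA a x y -> tau a x = tau a y.
Proof.
  intros Hj Hs. unfold tau.
  assert (E : inA a x <-> inA a y).
  { split; apply inA_same; auto. apply sameA_sym; auto. }
  destruct (decP (inA a x)) as [[-> Hx]|[-> Hx]];
  destruct (decP (inA a y)) as [[-> Hy]|[-> Hy]]; try tauto.
  f_equal. apply proof_irrelevance.
  assert (Ep : (fun r => sameA a r x) = (fun r => sameA a r y)).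
  { apply functional_extensionality; intro r. apply propositional_extensionality.
    split; intro. eapply sameA_trans; eauto. eapply sameA_trans; eauto. apply sameA_sym; auto. }
  exact Ep.
Qed.


Lemma decomp {F H : group} (a : F -> H) h : ginj a -> h = gmul (a (phi a h)) (tau a h).
Proof.
  intros Hj. unfold phi. apply (epsilon_spec (inhabits gone) (fun f => h = gmul (a f) (tau a h))).
  destruct (sameA_sym _ _ _ Hj (tau_same a h Hj)) as [f Hf]. eauto.
Qed.
Lemma tau_mul {F H : group} (a : F -> H) f h : ginj a -> tau a (gmul (a f) h) = tau a h.
Proof. intros Hj. apply tau_congr; auto. exists f; auto. Qed.
Lemma phi_mul {F H : group} (a : F -> H) f h : ginj a -> phi a (gmul (a f) h) = gmul f (phi a h).
Proof.
  intros Hj. pose proof (decomp a (gmul (a f) h) Hj) as E1. rewrite tau_mul in E1; auto.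
  rewrite (decomp a h Hj) in E1 at 1. rewrite gmulA, <- (proj1 Hj) in E1.
  apply mul_cancel_r in E1. apply (proj2 Hj) in E1. auto.
Qed.
Lemma tau_inA {F H : group} (a : F -> H) h : inA a h -> tau a h = gone.
Proof. intro I. unfold tau. rewrite decT; auto. Qed.
Lemma tau_one_inA {F H : group} (a : F -> H) h : ginj a -> tau a h = gone -> inA a h.
Proof. intros Hj E. exists (phi a h). rewrite (decomp a h Hj) at 2. rewrite E, gmul1r; auto. Qed.
Lemma tau_idem {F H : group} (a : F -> H) h : ginj a -> tau a (tau a h) = tau a h.
Proof. intros Hj. apply tau_congr; auto. apply tau_same; auto. Qed.
Lemma phi_rep {F H : group} (a : F -> H) r : ginj a -> tau a r = r -> phi a r = gone.
Proof.
  intros Hj E. pose proof (decomp a r Hj) as D. rewrite E in D.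
  rewrite <- (gmul1l _ r) in D at 1. apply mul_cancel_r in D.
  apply (proj2 Hj). rewrite hom_one; auto. apply Hj.
Qed.
Lemma tau_one {F H : group} (a : F -> H) : ginj a -> tau a gone = gone.
Proof. intros Hj. apply tau_inA. exists gone. apply hom_one, Hj. Qed.
Lemma phi_a {F H : group} (a : F -> H) f : ginj a -> phi a (a f) = f.
Proof.
  intros Hj. rewrite <- (gmul1r _ (a f)), phi_mul, phi_rep, gmul1r; auto. apply tau_one; auto.
Qed.
Lemma rep_inA {F H : group} (a : F -> H) r : tau a r = r -> inA a r -> r = gone.
Proof. intros E I. rewrite <- E. apply tau_inA; auto. Qed.
Lemma inA_mul {F H : group} (a : F -> H) f h : ginj a -> (inA a (gmul (a f) h) <-> inA a h).
Proof.
  intros Hj. split; apply inA_same; auto. apply sameA_sym; auto. exists f; auto. exists f; auto.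
Qed.

Definition isdist (G : group) (Sg : list G) (g : G) (n : nat) : Prop :=
  (exists w, word_in Sg w /\ wprod w = g /\ length w = n) /\
  (forall w, word_in Sg w -> wprod w = g -> n <= length w).

Lemma isdist_ex (G : group) (Sg : list G) g : (exists w, word_in Sg w /\ wprod w = g) -> exists n, isdist G Sg g n.
Proof.
  intros [w [W E]].
  destruct (dec_inh_nat_subset_has_unique_least_element
     (fun n => exists w, word_in Sg w /\ wprod w = g /\ length w = n)) as [n [[P1 P2] _]].
  - intro n. apply Classical_Prop.classic.
  - exists (length w), w; auto.
  - exists n. split; auto. intros w' W' E'. apply P2. exists w'; auto.
Qed.
Lemma isdist_uniq (G : group) (Sg : list G) g n m : isdist G Sg g n -> isdist G Sg g m -> n = m.
Proof.
  intros [[w1 [W1 [E1 L1]]] M1] [[w2 [W2 [E2 L2]]] M2].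
  specialize (M1 w2 W2 E2). specialize (M2 w1 W1 E1). lia.
Qed.

Definition len (G : group) (Sg : list G) (g : G) : nat := epsilon (inhabits 0) (isdist G Sg g).

Lemma len_spec (G : group) (Sg : list G) g : gen_set G Sg -> isdist G Sg g (len G Sg g).
Proof. intros [_ Hg]. unfold len. apply epsilon_spec. apply isdist_ex; auto. Qed.
Lemma len_min (G : group) (Sg : list G) g w : gen_set G Sg -> word_in Sg w -> wprod w = g -> len G Sg g <= length w.
Proof. intros Hs. apply (proj2 (len_spec G Sg g Hs)). Qed.
Lemma len_one (G : group) (Sg : list G) : gen_set G Sg -> len G Sg gone = 0.
Proof. intros Hs. pose proof (len_min G Sg gone [] Hs). simpl in H. assert (len G Sg gone <= 0).
  apply H; auto. intros x []. lia. Qed.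
Lemma len_step (G : group) (Sg : list G) s g : gen_set G Sg -> In s Sg -> len G Sg (gmul s g) <= S (len G Sg g).
Proof.
  intros Hs I. destruct (proj1 (len_spec G Sg g Hs)) as [w [W [E L]]].
  rewrite <- L. change (S (length w)) with (length (s :: w)). apply len_min; auto.
  intros x [->|Hx]; auto. simpl. rewrite E; auto.
Qed.
Lemma len_step_inv (G : group) (Sg : list G) s g : gen_set G Sg -> In s Sg -> len G Sg g <= S (len G Sg (gmul s g)).
Proof.
  intros Hs I. rewrite <- (gmul1l _ g) at 1. rewrite <- (gmulVl _ s), <- gmulA.
  apply len_step; auto. apply (proj1 Hs); auto.
Qed.


Definition act1 (G : group) (x : G) (p : G * bool) : G * bool := (gmul x (fst p), snd p).
Lemma act1_1 (G : group) p : act1 G gone p = p.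
Proof. destruct p; unfold act1; simpl; rewrite gmul1l; auto. Qed.
Lemma act1_M (G : group) x y p : act1 G (gmul x y) p = act1 G x (act1 G y p).
Proof. destruct p; unfold act1; simpl; rewrite gmulA; auto. Qed.

Definition act2 (G : group) (W : G -> Prop) (x : G) (p : G * bool) : G * bool :=
  (gmul x (fst p), xorb (snd p) (xorb (dec (W (fst p))) (dec (W (gmul x (fst p)))))).
Lemma act2_1 (G : group) W p : act2 G W gone p = p.
Proof. destruct p as [y b]; unfold act2; simpl; rewrite gmul1l.
  destruct b, (dec (W y)); auto. Qed.
Lemma act2_M (G : group) W x y p : act2 G W (gmul x y) p = act2 G W x (act2 G W y p).
Proof. destruct p as [z b]; unfold act2; simpl; rewrite gmulA.
  destruct b, (dec (W z)), (dec (W (gmul y z))), (dec (W (gmul (gmul x y) z))); auto. Qed.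

Definition hom1 (G : group) := act_perm G (G * bool) (act1 G) (act1_1 G) (act1_M G).
Definition hom2 (G : group) W := act_perm G (G * bool) (act2 G W) (act2_1 G W) (act2_M G W).

Lemma hom2_gen (G : group) (W : G -> Prop) (x : G) :
  (forall y, W y -> W (gmul x y)) -> (forall y, W y -> W (gmul (ginv x) y)) ->
  hom2 G W x = hom1 G x.
Proof.
  intros H1 H2. apply perm_ext. intros [y b]. simpl. unfold act2, act1; simpl. f_equal.
  destruct (decP (W y)) as [[-> Wy]|[-> Wy]]; destruct (decP (W (gmul x y))) as [[-> Wx]|[-> Wx]];
  destruct b; auto.
  all: exfalso; try (apply Wx; auto); apply Wy; rewrite <- (gmul1l _ y), <- (gmulVl _ x), <- gmulA; auto.
Qed.

Lemma hom12_all (G : group) (W : G -> Prop) : W gone ->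
  (forall x, hom1 G x = hom2 G W x) -> forall x, W x.
Proof.
  intros W1 E x. pose proof (f_equal (fun p => pf p (gone, false)) (E x)) as Ex. simpl in Ex.
  unfold act1, act2 in Ex; simpl in Ex. rewrite gmul1r in Ex. injection Ex as Ex.
  rewrite (decT _ W1) in Ex. destruct (decP (W x)) as [[_ Wx]|[F Wx]]; auto. rewrite F in Ex. discriminate.
Qed.


Definition okL {F A B : group} (a : F -> A) (b : F -> B) (l : A + B) : Prop :=
  match l with inl t => tau a t = t /\ ~ inA a t | inr u => tau b u = u /\ ~ inA b u end.
Definition alt {A B : Type} (l : A + B) (r : list (A + B)) : Prop :=
  match l, r with inl _, inl _ :: _ => False | inr _, inr _ :: _ => False | _, _ => True end.
Fixpoint validL {F A B : group} (a : F -> A) (b : F -> B) (s : list (A + B)) : Prop :=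
  match s with [] => True | l :: r => okL a b l /\ alt l r /\ validL a b r end.
Definition noinl {A B : Type} (s : list (A + B)) : Prop :=
  match s with inl _ :: _ => False | _ => True end.

Definition bAinv {F A B : group} (a : F -> A) (x : F * list (A + B)) : A * list (A + B) :=
  match snd x with inl t :: r => (gmul (a (fst x)) t, r) | _ => (a (fst x), snd x) end.
Definition bA {F A B : group} (a : F -> A) (p : A * list (A + B)) : F * list (A + B) :=
  if dec (inA a (fst p)) then (phi a (fst p), snd p)
  else (phi a (fst p), inl (tau a (fst p)) :: snd p).
Definition actA {F A B : group} (a : F -> A) (b : F -> B) (s : A) (x : F * list (A + B))
  : F * list (A + B) :=
  if dec (validL a b (snd x)) then bA a (gmul s (fst (bAinv a x)), snd (bAinv a x)) else x.

Lemma bA_bAinv {F A B : group} (a : F -> A) (b : F -> B) f s : ginj a -> validL a b s ->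
  bA a (bAinv a (f, s)) = (f, s).
Proof.
  intros Hj V. destruct s as [|[t|u] r]; unfold bAinv, bA; simpl.
  - rewrite decT by (exists f; auto). rewrite phi_a; auto.
  - destruct V as [[Et Nt] _]. rewrite decF by (rewrite inA_mul; auto).
    rewrite tau_mul, phi_mul, phi_rep, Et, gmul1r; auto.
  - rewrite decT by (exists f; auto). rewrite phi_a; auto.
Qed.

Lemma inA_phi {F A : group} (a : F -> A) h : ginj a -> inA a h -> a (phi a h) = h.
Proof. intros Hj I. rewrite (decomp a h Hj) at 2. rewrite tau_inA, gmul1r; auto. Qed.

Lemma bAinv_bA {F A B : group} (a : F -> A) (h : A) (y : list (A + B)) : ginj a -> noinl y ->
  bAinv a (bA a (h, y)) = (h, y).
Proof.
  intros Hj N. unfold bA; simpl. destruct (decP (inA a h)) as [[-> I]|[-> I]]; unfold bAinv; simpl.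
  - destruct y as [|[t|u] r]; simpl in *; try tauto; rewrite inA_phi; auto.
  - rewrite <- decomp; auto.
Qed.

Lemma bAinv_valid {F A B : group} (a : F -> A) (b : F -> B) f s : validL a b s ->
  validL a b (snd (bAinv a (f, s))) /\ noinl (snd (bAinv a (f, s))).
Proof.
  intros V. destruct s as [|[t|u] r]; unfold bAinv; simpl in *; try tauto.
Qed.

Lemma bA_valid {F A B : group} (a : F -> A) (b : F -> B) h y : ginj a -> validL a b y -> noinl y ->
  validL a b (snd (bA a (h, y))).
Proof.
  intros Hj V N. unfold bA; simpl. destruct (decP (inA a h)) as [[-> I]|[-> I]]; simpl; auto.
  split; [|split]; auto.
  - split. apply tau_idem; auto. intro I'. apply I. eapply inA_same; eauto. apply sameA_sym, tau_same; auto.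
Qed.

Lemma actA_valid {F A B : group} (a : F -> A) (b : F -> B) s x : ginj a ->
  (validL a b (snd (actA a b s x)) <-> validL a b (snd x)).
Proof.
  intros Hj. destruct x as [f l]. unfold actA. simpl.
  destruct (decP (validL a b l)) as [[-> V]|[-> V]]; simpl; try tauto.
  split; auto; intros _. destruct (bAinv_valid a b f l V). apply bA_valid; auto.
Qed.

Lemma actA_1 {F A B : group} (a : F -> A) (b : F -> B) x : ginj a -> actA a b gone x = x.
Proof.
  intros Hj. destruct x as [f l]. unfold actA; simpl.
  destruct (decP (validL a b l)) as [[-> V]|[-> V]]; auto.
  rewrite gmul1l. rewrite <- surjective_pairing. apply (bA_bAinv a b); auto.
Qed.

Lemma actA_M {F A B : group} (a : F -> A) (b : F -> B) s1 s2 x : ginj a ->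
  actA a b (gmul s1 s2) x = actA a b s1 (actA a b s2 x).
Proof.
  intros Hj. destruct x as [f l]. unfold actA at 1 3; simpl.
  destruct (decP (validL a b l)) as [[-> V]|[-> V]]; simpl.
  2:{ unfold actA. simpl. rewrite decF; auto. }
  destruct (bAinv_valid a b f l V) as [V1 N1].
  unfold actA. rewrite decT.
  2:{ apply bA_valid; auto. }
  rewrite bAinv_bA; auto. simpl. rewrite gmulA; auto.
Qed.

Lemma actA_F {F A B : group} (a : F -> A) (b : F -> B) g f l : ginj a -> validL a b l ->
  actA a b (a g) (f, l) = (gmul g f, l).
Proof.
  intros Hj V. unfold actA; simpl. rewrite decT; auto.
  transitivity (bA a (bAinv a (gmul g f, l))); [|apply (bA_bAinv a b); auto]. f_equal.
  destruct l as [|[t|u] r]; unfold bAinv; simpl; rewrite (proj1 Hj); try rewrite gmulA; auto.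
Qed.

Lemma actA_inv {F A B : group} (a : F -> A) (b : F -> B) s x : ~ validL a b (snd x) -> actA a b s x = x.
Proof. intros N. unfold actA. rewrite decF; auto. Qed.

Lemma actA_shape {F A B : group} (a : F -> A) (b : F -> B) s f l : validL a b l ->
  exists y, ((y = l /\ noinl l) \/ exists t, l = inl t :: y) /\
     (snd (actA a b s (f, l)) = y \/ exists t, snd (actA a b s (f, l)) = inl t :: y).
Proof.
  intros V. unfold actA; simpl. rewrite decT; auto.
  exists (snd (bAinv a (f, l))). split.
  - destruct l as [|[t|u] r]; unfold bAinv; simpl; eauto.
  - unfold bA; simpl. destruct (dec _); simpl; eauto.
Qed.


Definition swapS {A B : Type} (l : A + B) : B + A := match l with inl x => inr x | inr y => inl y end.
Lemma swap_swap {A B : Type} (s : list (A + B)) : map swapS (map swapS s) = s.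
Proof. induction s as [|[] r IH]; simpl; f_equal; auto. Qed.

Lemma valid_swap {F A B : group} (a : F -> A) (b : F -> B) s :
  validL b a (map swapS s) <-> validL a b s.
Proof.
  induction s as [|l r IH]; simpl; try tauto.
  assert (alt (swapS l) (map swapS r) <-> alt l r).
  { destruct l, r as [|[]]; simpl; tauto. }
  destruct l; simpl; tauto.
Qed.

Definition actB {F A B : group} (a : F -> A) (b : F -> B) (k : B) (x : F * list (A + B))
  : F * list (A + B) :=
  (fst (actA b a k (fst x, map swapS (snd x))), map swapS (snd (actA b a k (fst x, map swapS (snd x))))).

Lemma actB_1 {F A B : group} (a : F -> A) (b : F -> B) x : ginj b -> actB a b gone x = x.
Proof. intros Hj. destruct x. unfold actB. rewrite actA_1; simpl; auto. rewrite swap_swap; auto. Qed.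

Lemma actB_M {F A B : group} (a : F -> A) (b : F -> B) s1 s2 x : ginj b ->
  actB a b (gmul s1 s2) x = actB a b s1 (actB a b s2 x).
Proof.
  intros Hj. destruct x. unfold actB. simpl. rewrite swap_swap, <- surjective_pairing, actA_M; auto.
Qed.

Lemma actB_F {F A B : group} (a : F -> A) (b : F -> B) g f l : ginj b -> validL a b l ->
  actB a b (b g) (f, l) = (gmul g f, l).
Proof.
  intros Hj V. unfold actB; simpl. rewrite actA_F; simpl; auto. rewrite swap_swap; auto.
  apply valid_swap; auto.
Qed.

Lemma actB_inv {F A B : group} (a : F -> A) (b : F -> B) s x : ~ validL a b (snd x) -> actB a b s x = x.
Proof. intros N. destruct x. unfold actB. rewrite actA_inv; simpl. rewrite swap_swap; auto.
  rewrite valid_swap; auto. Qed.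

Lemma actB_valid {F A B : group} (a : F -> A) (b : F -> B) s x : ginj b ->
  (validL a b (snd (actB a b s x)) <-> validL a b (snd x)).
Proof.
  intros Hj. destruct x. unfold actB; simpl. rewrite (valid_swap b a), actA_valid; simpl; auto.
  apply valid_swap.
Qed.

Definition noinr {A B : Type} (s : list (A + B)) : Prop :=
  match s with inr _ :: _ => False | _ => True end.

Lemma actB_shape {F A B : group} (a : F -> A) (b : F -> B) s f l : validL a b l ->
  exists y, ((y = l /\ noinr l) \/ exists t, l = inr t :: y) /\
     (snd (actB a b s (f, l)) = y \/ exists t, snd (actB a b s (f, l)) = inr t :: y).
Proof.
  intros V. rewrite <- (valid_swap a b) in V.
  destruct (actA_shape b a s f _ V) as [y [H1 H2]].
  exists (map swapS y). split.
  - destruct H1 as [[-> N]|[t E]].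
    + left. rewrite swap_swap. split; auto. destruct l as [|[]]; simpl in *; auto.
    + right. exists t. rewrite <- (swap_swap l), E. reflexivity.
  - unfold actB; simpl. destruct H2 as [E|[t E]]; rewrite E; simpl; eauto.
Qed.

Fixpoint lastc {A B : Type} (ln : A -> nat) (s : list (A + B)) : nat :=
  match s with
  | [] => 0
  | x :: r => match r with
              | [] => match x with inl t => ln t | inr _ => 0 end
              | _ => lastc ln r end
  end.
Definition cA {F A : group} {B : Type} (a : F -> A) (ln : A -> nat) (x : F * list (A + B)) : nat :=
  match snd x with
  | [] => ln (a (fst x))
  | [inl t] => ln (gmul (a (fst x)) t)
  | _ => lastc ln (snd x)
  end.

Lemma lastc_cons {A B : Type} (ln : A -> nat) (x : A + B) r : r <> [] -> lastc ln (x :: r) = lastc ln r.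
Proof. destruct r; simpl; tauto. Qed.

Lemma cA_bA_nil {F A B : group} (a : F -> A) ln h : ginj a ->
  cA (B:=B) a ln (bA a (h, [])) = ln h.
Proof.
  intros Hj. unfold bA, cA; simpl. destruct (decP (inA a h)) as [[-> I]|[-> I]]; simpl.
  rewrite inA_phi; auto. rewrite <- decomp; auto.
Qed.

Lemma cA_bA_ne {F A B : group} (a : F -> A) ln h (y : list (A + B)) : y <> [] -> noinl y ->
  cA a ln (bA a (h, y)) = lastc ln y.
Proof.
  intros Ne N. unfold bA, cA; simpl. destruct (dec _); simpl.
  - destruct y as [|[t|u] [|]]; simpl in *; tauto.
  - destruct y; [tauto|]. reflexivity.
Qed.

Lemma lipA {F A B : group} (a : F -> A) (b : F -> B) ln s x : ginj a ->
  (forall h, ln (gmul s h) <= S (ln h)) -> cA a ln (actA a b s x) <= S (cA a ln x).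
Proof.
  intros Hj Hs. destruct x as [f l].
  destruct (decP (validL a b l)) as [[_ V]|[_ V]].
  2:{ rewrite actA_inv; auto. }
  unfold actA; simpl. rewrite decT; auto.
  destruct l as [|[t|u] r]; unfold bAinv; simpl.
  - rewrite cA_bA_nil; auto; try apply Hs.
  - destruct r as [|x r'].
    + rewrite cA_bA_nil; auto; try apply Hs.
    + destruct V as [_ [Al _]]. destruct x as [t'|u']; simpl in Al; [tauto|].
      rewrite cA_bA_ne; try discriminate; simpl; auto.
  - rewrite cA_bA_ne; try discriminate; simpl; auto.
Qed.

Lemma lipB {F A B : group} (a : F -> A) (b : F -> B) ln k x :
  (forall g h, ln (gmul (a g) h) <= S (ln h)) ->
  (forall g h, ln h <= S (ln (gmul (a g) h))) ->
  (forall g g' h, ln (gmul (a g) h) <= S (ln (gmul (a g') h))) ->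
  (forall g, ln (a g) <= 1) ->
  cA a ln (actB a b k x) <= S (cA a ln x).
Proof.
  intros HA HB HC HD. destruct x as [f l].
  destruct (decP (validL a b l)) as [[_ V]|[_ V]].
  2:{ rewrite actB_inv; auto. }
  destruct (actB_shape a b k f l V) as [y [H1 H2]].
  destruct (actB a b k (f, l)) as [f' l']. simpl in H2.
  unfold cA; simpl.
  destruct H1 as [[-> N]|[u ->]].
  - destruct l as [|[t|u] r]; simpl in N; try tauto.
    + destruct H2 as [->|[u' ->]]; simpl. specialize (HD f'); lia. lia.
    + destruct H2 as [->|[u' ->]]; simpl.
      * destruct r; auto.
      * destruct r; simpl; auto.
  - destruct H2 as [->|[u' ->]].
    + destruct y as [|[t|u''] [|z r]]; simpl; auto.
    + destruct y as [|z r]; simpl; auto.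
Qed.


Fixpoint validH {F H : group} (sl : bool -> F -> H) (s : list (bool * H)) : Prop :=
  match s with
  | [] => True
  | (e, r) :: s' => tau (sl e) r = r /\
      (match s' with [] => True | (e', _) :: _ => r = gone -> e' = e end) /\ validH sl s'
  end.
Definition starts {H : Type} (s : list (bool * H)) (e : bool) : Prop :=
  match s with (e', _) :: _ => e' = e | [] => False end.

Definition stepT {F H : group} (sl : bool -> F -> H) (e : bool) (x : H * list (bool * H))
  : H * list (bool * H) :=
  if dec (validH sl (snd x)) then
    if dec (inA (sl e) (fst x)) then
      match snd x with
      | (e', r') :: s' => if Bool.eqb e' (negb e) then (gmul (sl (negb e) (phi (sl e) (fst x))) r', s')
                          else (sl (negb e) (phi (sl e) (fst x)), (e, tau (sl e) (fst x)) :: snd x)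
      | [] => (sl (negb e) (phi (sl e) (fst x)), (e, tau (sl e) (fst x)) :: snd x)
      end
    else (sl (negb e) (phi (sl e) (fst x)), (e, tau (sl e) (fst x)) :: snd x)
  else x.

Lemma stepT_np {F H : group} (sl : bool -> F -> H) e h s : validH sl s ->
  (~ inA (sl e) h \/ ~ starts s (negb e)) ->
  stepT sl e (h, s) = (sl (negb e) (phi (sl e) h), (e, tau (sl e) h) :: s).
Proof.
  intros V C. unfold stepT; simpl. rewrite decT; auto.
  destruct (decP (inA (sl e) h)) as [[-> I]|[-> I]]; auto.
  destruct C as [C|C]; [tauto|]. destruct s as [|[e' r'] s']; auto. simpl in C.
  destruct (Bool.eqb e' (negb e)) eqn:E; auto. apply Bool.eqb_prop in E. tauto.
Qed.

Lemma stepT_p {F H : group} (sl : bool -> F -> H) e h r s : validH sl ((negb e, r) :: s) ->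
  inA (sl e) h -> stepT sl e (h, (negb e, r) :: s) = (gmul (sl (negb e) (phi (sl e) h)) r, s).
Proof.
  intros V I. unfold stepT; simpl. rewrite decT; auto. rewrite decT; auto.
  rewrite Bool.eqb_reflx. auto.
Qed.

Lemma stepT_inval {F H : group} (sl : bool -> F -> H) e x : ~ validH sl (snd x) -> stepT sl e x = x.
Proof. intros N. unfold stepT. rewrite decF; auto. Qed.

Lemma stepT_valid {F H : group} (sl : bool -> F -> H) e h s : (forall e, ginj (sl e)) -> validH sl s ->
  validH sl (snd (stepT sl e (h, s))).
Proof.
  intros Hj V.
  destruct (classic (inA (sl e) h /\ starts s (negb e))) as [[I St]|C].
  - destruct s as [|[e' r'] s']; simpl in St; [tauto|]. subst e'.
    rewrite stepT_p; auto. simpl. apply V.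
  - rewrite stepT_np; auto. simpl. split; [|split]; auto.
    + apply tau_idem; auto.
    + destruct s as [|[e' r'] s']; auto. intro E1.
      destruct (Bool.bool_dec e' e) as [|n]; auto. exfalso. apply C. split.
      * apply tau_one_inA; auto.
      * simpl. destruct e, e'; simpl in *; auto; congruence.
    + apply Classical_Prop.not_and_or in C. tauto.
Qed.

Lemma stepT_p2 {F H : group} (sl : bool -> F -> H) e e' h r s : e' = negb e -> validH sl ((e', r) :: s) ->
  inA (sl e) h -> stepT sl e (h, (e', r) :: s) = (gmul (sl (negb e) (phi (sl e) h)) r, s).
Proof. intros ->. apply stepT_p. Qed.

Lemma step_inv {F H : group} (sl : bool -> F -> H) e x : (forall e, ginj (sl e)) ->
  stepT sl (negb e) (stepT sl e x) = x.
Proof.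
  intros Hj. destruct x as [h s].
  destruct (classic (validH sl s)) as [V|V].
  2:{ rewrite (stepT_inval sl e); simpl; auto. rewrite (stepT_inval sl (negb e)); simpl; auto. }
  destruct (classic (inA (sl e) h /\ starts s (negb e))) as [[I St]|C].
  - destruct s as [|[e' r'] s']; simpl in St; [tauto|]. subst e'.
    rewrite stepT_p; auto. destruct V as [Rr [Al V']].
    rewrite stepT_np; auto.
    + rewrite phi_mul, tau_mul, (phi_rep _ r'), Rr, negb_involutive; auto. rewrite gmul1r, inA_phi; auto.
    + destruct (classic (inA (sl (negb e)) r')) as [Ir|Ir].
      * right. rewrite negb_involutive. pose proof (rep_inA _ _ Rr Ir) as E.
        destruct s' as [|[e'' r''] s'']; simpl; auto. specialize (Al E). subst e''.
        destruct e; discriminate.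
      * left. rewrite inA_mul; auto.
  - rewrite stepT_np; auto.
    2:{ apply Classical_Prop.not_and_or in C. tauto. }
    rewrite (stepT_p2 sl (negb e) e).
    + rewrite negb_involutive, phi_a, <- decomp; auto.
    + rewrite negb_involutive; auto.
    + pose proof (stepT_valid sl e h s Hj V) as V2. rewrite stepT_np in V2; auto.
      apply Classical_Prop.not_and_or in C. tauto.
    + exists (phi (sl e) h). auto.
Qed.

Definition actHH {F H : group} (sl : bool -> F -> H) (g : H) (x : H * list (bool * H)) : H * list (bool * H) :=
  if dec (validH sl (snd x)) then (gmul g (fst x), snd x) else x.

Lemma actHH_1 {F H : group} (sl : bool -> F -> H) x : actHH sl gone x = x.
Proof. destruct x. unfold actHH. simpl. destruct (dec _); auto. rewrite gmul1l; auto. Qed.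
Lemma actHH_M {F H : group} (sl : bool -> F -> H) g1 g2 x :
  actHH sl (gmul g1 g2) x = actHH sl g1 (actHH sl g2 x).
Proof.
  destruct x as [h s]. unfold actHH; simpl. destruct (decP (validH sl s)) as [[-> V]|[-> V]]; simpl.
  rewrite decT, gmulA; auto. rewrite decF; auto.
Qed.

Lemma step_equiv {F H : group} (sl : bool -> F -> H) e g x : (forall e, ginj (sl e)) ->
  stepT sl e (actHH sl (sl e g) x) = actHH sl (sl (negb e) g) (stepT sl e x).
Proof.
  intros Hj. destruct x as [h s]. unfold actHH at 1; simpl.
  destruct (decP (validH sl s)) as [[-> V]|[-> V]].
  2:{ rewrite stepT_inval; auto. unfold actHH; simpl. rewrite decF; auto. }
  simpl. unfold actHH.
  rewrite decT by (apply stepT_valid; auto). f_equal.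
  destruct (classic (inA (sl e) h /\ starts s (negb e))) as [[I St]|C].
  - destruct s as [|[e' r'] s']; simpl in St; [tauto|]. subst e'.
    rewrite !stepT_p; auto. simpl. rewrite phi_mul, (proj1 (Hj (negb e))), gmulA; auto.
    rewrite inA_mul; auto.
  - rewrite !stepT_np; auto. simpl. rewrite phi_mul, tau_mul, (proj1 (Hj (negb e))); auto.
    + apply Classical_Prop.not_and_or in C. tauto.
    + rewrite inA_mul; auto. apply Classical_Prop.not_and_or in C. tauto.
Qed.

Definition cH {H : group} (ln : H -> nat) (x : H * list (bool * H)) : nat :=
  match snd x with [] => ln (fst x) | _ => ln (snd (last (snd x) (true, gone))) end.

Lemma last_cons' {A : Type} (x : A) s d : s <> [] -> last (x :: s) d = last s d.
Proof. destruct s; [tauto|]. reflexivity. Qed.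

Lemma lip_step {F H : group} (sl : bool -> F -> H) e ln x : (forall e, ginj (sl e)) ->
  (forall g h, ln h <= S (ln (gmul (sl e g) h))) ->
  (forall g h, ln (gmul (sl (negb e) g) h) <= S (ln h)) ->
  cH ln (stepT sl e x) <= S (cH ln x).
Proof.
  intros Hj HA HB. destruct x as [h s].
  destruct (classic (validH sl s)) as [V|V].
  2:{ rewrite stepT_inval; auto. }
  destruct (classic (inA (sl e) h /\ starts s (negb e))) as [[I St]|C].
  - destruct s as [|[e' r'] s']; simpl in St; [tauto|]. subst e'.
    rewrite stepT_p; auto. unfold cH; simpl.
    destruct s' as [|y s'']; simpl; auto.
  - rewrite stepT_np; auto.
    2:{ apply Classical_Prop.not_and_or in C. tauto. }
    unfold cH; simpl. destruct s as [|y s'].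
    + simpl. rewrite (decomp (sl e) h) at 2; auto.
    + auto.
Qed.

Lemma lip_act {F H : group} (sl : bool -> F -> H) g ln x :
  (forall h, ln (gmul g h) <= S (ln h)) -> cH ln (actHH sl g x) <= S (cH ln x).
Proof.
  intros Hg. destruct x as [h s]. unfold actHH; simpl. destruct (dec _); unfold cH; simpl; auto.
  destruct s; auto.
Qed.


Lemma sym_gen (X : group) (L0 L : list X) : (forall x, In x L0 -> In x L) ->
  (forall g, exists w, word_in L0 w /\ wprod w = g) -> gen_set X (L ++ map ginv L).
Proof.
  intros Sub Hg. split.
  - intros s Hs. apply in_app_or in Hs as [Hs|Hs]; apply in_or_app.
    + right. apply in_map; auto.
    + left. apply in_map_iff in Hs as [y [<- Hy]]. rewrite inv_inv; auto.
  - intro g. destruct (Hg g) as [w [W E]]. exists w. split; auto.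
    intros x Hx. apply in_or_app. left. apply Sub, W; auto.
Qed.

Lemma finish (G H : group) (i : H -> G) SH SG : is_hom i -> gen_set H SH ->
  (forall s, In s SH -> In (i s) SG) ->
  (forall h w, word_in SG w -> wprod w = i h -> len H SH h <= length w) ->
  forall h1 h2 n, word_dist H SH h1 h2 n <-> word_dist G SG (i h1) (i h2) n.
Proof.
  intros Hi Hs Sub Low h1 h2 n.
  change (isdist H SH (gmul (ginv h1) h2) n <-> isdist G SG (gmul (ginv (i h1)) (i h2)) n).
  rewrite <- (hom_inv _ _ i Hi), <- Hi. set (h := gmul (ginv h1) h2).
  pose proof (len_spec H SH h Hs) as D1.
  assert (D2 : isdist G SG (i h) (len H SH h)).
  { split.
    - destruct (proj1 D1) as [w [W [E L]]]. exists (map i w). split; [|split].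
      + intros x Hx. apply in_map_iff in Hx as [y [<- Hy]]. apply Sub, W; auto.
      + rewrite wprod_map, E; auto.
      + rewrite length_map; auto.
    - intros w W E. apply Low; auto. }
  split; intro D.
  - rewrite (isdist_uniq _ _ _ _ _ D D1); auto.
  - rewrite (isdist_uniq _ _ _ _ _ D D2); auto.
Qed.

Lemma W_mul (G H : group) (i : H -> G) SH SG : is_hom i -> gen_set H SH ->
  (forall s, In s SH -> In (i s) SG) ->
  forall h y, (exists w, word_in SG w /\ wprod w = y) -> exists w, word_in SG w /\ wprod w = gmul (i h) y.
Proof.
  intros Hi [_ Hs] Sub h y [wy [Wy Ey]]. destruct (Hs h) as [wh [Wh Eh]].
  exists (map i wh ++ wy). split.
  - intros x Hx. apply in_app_or in Hx as [Hx|Hx]; auto.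
    apply in_map_iff in Hx as [z [<- Hz]]. apply Sub, Wh; auto.
  - rewrite wprod_app, wprod_map, Eh, Ey; auto.
Qed.

Lemma hom_comp (A B C : group) (f : A -> B) (g : B -> C) : is_hom f -> is_hom g -> is_hom (fun x => g (f x)).
Proof. intros Hf Hg x y. rewrite Hf, Hg; auto. Qed.

Lemma hom1_hom (G : group) : is_hom (hom1 G).
Proof. apply act_perm_hom. Qed.


Lemma amalgam_case (G H K F : group) (i : H -> G) (j : K -> G) (a : F -> H) (b : F -> K) :
  finitely_generated H -> is_hom a -> is_hom b -> injective a -> injective b ->
  finite_group F -> finitely_generated K -> is_amalgam G H K F i j a b ->
  exists (SH : list H) (SG : list G),
    gen_set H SH /\ gen_set G SG /\ (forall s, In s SH -> In (i s) SG) /\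
    forall (h1 h2 : H) (n : nat),
      word_dist H SH h1 h2 n <-> word_dist G SG (i h1) (i h2) n.
Proof.
  intros [S0 HS0] Ha Hb ia ib [lF HF] [S0K HK] [Hi [Hj [Hc UP]]].
  assert (Ja : ginj a) by (split; auto). assert (Jb : ginj b) by (split; auto).
  set (LH := S0 ++ map a lF). set (SH := LH ++ map ginv LH).
  set (SK := S0K ++ map ginv S0K). set (SG := map i SH ++ map j SK).
  assert (GH : gen_set H SH).
  { apply (sym_gen H S0); auto. intros x Hx. apply in_or_app; auto. }
  assert (GK : gen_set K SK).
  { apply (sym_gen K S0K); auto. }
  assert (aS : forall g, In (a g) SH).
  { intro g. apply in_or_app. left. apply in_or_app. right. apply in_map; auto. }
  assert (aSi : forall g, In (ginv (a g)) SH) by (intro; apply (proj1 GH); auto).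
  assert (SubH : forall s, In s SH -> In (i s) SG).
  { intros s Hs. apply in_or_app. left. apply in_map; auto. }
  assert (SubK : forall s, In s SK -> In (j s) SG).
  { intros s Hs. apply in_or_app. right. apply in_map; auto. }
  set (ln := len H SH).
  assert (HA : forall g h, ln (gmul (a g) h) <= S (ln h)) by (intros; apply len_step; auto).
  assert (HB : forall g h, ln h <= S (ln (gmul (a g) h))) by (intros; apply len_step_inv; auto).
  assert (HC : forall g g' h, ln (gmul (a g) h) <= S (ln (gmul (a g') h))).
  { intros g g' h. replace (gmul (a g) h) with (gmul (a (gmul g (ginv g'))) (gmul (a g') h)).
    apply HA. rewrite Ha, <- gmulA, (gmulA _ (a (ginv g'))), <- Ha, gmulVl, hom_one, gmul1l; auto. }
  assert (HD : forall g, ln (a g) <= 1).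
  { intro g. rewrite <- (gmul1r _ (a g)). pose proof (HA g gone). unfold ln in *.
    rewrite len_one in H0; auto. }
  set (X := (F * list (H + K))%type).
  set (pH := act_perm H X (actA a b) (fun x => actA_1 a b x Ja) (fun s1 s2 x => actA_M a b s1 s2 x Ja)).
  set (pK := act_perm K X (actB a b) (fun x => actB_1 a b x Jb) (fun s1 s2 x => actB_M a b s1 s2 x Jb)).
  assert (HpH : is_hom pH) by apply act_perm_hom.
  assert (HpK : is_hom pK) by apply act_perm_hom.
  assert (Agree : forall f, pH (a f) = pK (b f)).
  { intro f. apply perm_ext. intros [f0 l]. simpl.
    destruct (classic (validL a b l)) as [V|V].
    - rewrite actA_F, actB_F; auto.
    - rewrite actA_inv, actB_inv; auto. }
  destruct (proj1 (UP (perm_group X) pH pK HpH HpK Agree)) as [g [Hg [Hgi Hgj]]].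
  set (x0 := (@gone F, @nil (H + K))).
  assert (Bound : forall w, word_in SG w -> cA a ln (pf (g (wprod w)) x0) <= length w).
  { induction w as [|s w IH]; intros W; simpl.
    - rewrite (hom_one _ _ g Hg). simpl. unfold cA; simpl. rewrite (hom_one _ _ a Ha).
      unfold ln. rewrite len_one; auto.
    - rewrite Hg. simpl.
      assert (IH' : cA a ln (pf (g (wprod w)) x0) <= length w) by (apply IH; intros y Hy; apply W; simpl; auto).
      assert (Hs : In s SG) by (apply W; simpl; auto).
      apply in_app_or in Hs as [Hs|Hs]; apply in_map_iff in Hs as [z [<- Hz]].
      + rewrite Hgi. simpl. eapply Nat.le_trans. apply lipA; auto.
        intro h; apply len_step; auto. lia.
      + rewrite Hgj. simpl. eapply Nat.le_trans. apply lipB; auto. lia. }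
  exists SH, SG. split; [auto|split; [|split; [auto|]]].
  - split.
    + intros s Hs. apply in_app_or in Hs as [Hs|Hs]; apply in_map_iff in Hs as [z [<- Hz]];
      apply in_or_app.
      * left. rewrite <- (hom_inv _ _ i Hi). apply in_map. apply (proj1 GH); auto.
      * right. rewrite <- (hom_inv _ _ j Hj). apply in_map. apply (proj1 GK); auto.
    + set (W := fun x : G => exists w, word_in SG w /\ wprod w = x).
      apply (hom12_all G W).
      { exists []. split; auto. intros x []. }
      assert (Wi : forall h y, W y -> W (gmul (i h) y)) by (apply (W_mul G H i SH SG); auto).
      assert (Wj : forall k y, W y -> W (gmul (j k) y)) by (apply (W_mul G K j SK SG); auto).
      assert (Hp : is_hom (fun h => hom1 G (i h))) by (apply hom_comp; auto; apply hom1_hom).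
      assert (Hq : is_hom (fun k => hom1 G (j k))) by (apply hom_comp; auto; apply hom1_hom).
      assert (Hpq : forall f, hom1 G (i (a f)) = hom1 G (j (b f))) by (intro; rewrite Hc; auto).
      apply (proj2 (UP (perm_group (G * bool)) _ _ Hp Hq Hpq)); auto.
      * apply hom1_hom.
      * unfold hom2. apply act_perm_hom.
      * intro h. apply hom2_gen. apply Wi. rewrite <- (hom_inv _ _ i Hi). apply Wi.
      * intro k. apply hom2_gen. apply Wj. rewrite <- (hom_inv _ _ j Hj). apply Wj.
  - apply finish; auto.
    intros h w W E. pose proof (Bound w W) as Bw. rewrite E, Hgi in Bw. simpl in Bw.
    unfold actA in Bw. simpl in Bw. rewrite decT in Bw by exact I.
    unfold bAinv in Bw; simpl in Bw. rewrite cA_bA_nil in Bw; auto.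
    rewrite (hom_one _ _ a Ha), gmul1r in Bw. exact Bw.
Qed.


Definition sel {F H : group} (a b : F -> H) (e : bool) : F -> H := if e then a else b.

Lemma HNN_case (G H F : group) (i : H -> G) (t : G) (a b : F -> H) :
  finitely_generated H -> is_hom a -> is_hom b -> injective a -> injective b ->
  finite_group F -> is_HNN G H F i t a b ->
  exists (SH : list H) (SG : list G),
    gen_set H SH /\ gen_set G SG /\ (forall s, In s SH -> In (i s) SG) /\
    forall (h1 h2 : H) (n : nat),
      word_dist H SH h1 h2 n <-> word_dist G SG (i h1) (i h2) n.
Proof.
  intros [S0 HS0] Ha Hb ia ib [lF HF] [Hi [Hrel UP]].
  set (sl := sel a b).
  assert (Jsl : forall e, ginj (sl e)) by (intros []; split; auto).
  set (LH := S0 ++ map a lF ++ map b lF). set (SH := LH ++ map ginv LH).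
  set (SG := map i SH ++ [t; ginv t]).
  assert (GH : gen_set H SH).
  { apply (sym_gen H S0); auto. intros x Hx. apply in_or_app; auto. }
  assert (slS : forall e g, In (sl e g) SH).
  { intros e g. apply in_or_app. left. apply in_or_app. right. apply in_or_app.
    destruct e; [left|right]; apply in_map; auto. }
  assert (SubH : forall s, In s SH -> In (i s) SG).
  { intros s Hs. apply in_or_app. left. apply in_map; auto. }
  set (ln := len H SH).
  assert (HA : forall e g h, ln (gmul (sl e g) h) <= S (ln h)) by (intros; apply len_step; auto).
  assert (HB : forall e g h, ln h <= S (ln (gmul (sl e g) h))) by (intros; apply len_step_inv; auto).
  set (X := (H * list (bool * H))%type).
  set (pH := act_perm H X (actHH sl) (actHH_1 sl) (actHH_M sl)).
  assert (HpH : is_hom pH) by apply act_perm_hom.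
  assert (T : perm X).
  { refine (Perm (stepT sl true) (stepT sl false) _ _); intro x.
    apply (step_inv sl false); auto. apply (step_inv sl true); auto. }
  set (T' := Perm (stepT sl true) (stepT sl false) (fun x => step_inv sl false x Jsl)
                   (fun x => step_inv sl true x Jsl) : perm_group X).
  assert (Rel : forall f, gmul (gmul T' (pH (a f))) (ginv T') = pH (b f)).
  { intro f. apply perm_ext. intro x. simpl.
    change (a f) with (sl true f). rewrite (step_equiv sl true); auto.
    rewrite (step_inv sl false); auto. }
  destruct (proj1 (UP (perm_group X) pH T' HpH Rel)) as [g [Hg [Hgi Hgt]]].
  set (x0 := (@gone H, @nil (bool * H))).
  assert (Bound : forall w, word_in SG w -> cH ln (pf (g (wprod w)) x0) <= length w).
  { induction w as [|s w IH]; intros W; simpl.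
    - rewrite (hom_one _ _ g Hg). simpl. unfold cH; simpl.
      unfold ln. rewrite len_one; auto.
    - rewrite Hg. simpl.
      assert (IH' : cH ln (pf (g (wprod w)) x0) <= length w) by (apply IH; intros y Hy; apply W; simpl; auto).
      assert (Hs : In s SG) by (apply W; simpl; auto).
      apply in_app_or in Hs as [Hs|[<-|[<-|[]]]].
      + apply in_map_iff in Hs as [z [<- Hz]].
        rewrite Hgi. simpl. eapply Nat.le_trans. apply lip_act; auto.
        intro h; apply len_step; auto. lia.
      + rewrite Hgt. simpl. eapply Nat.le_trans. apply (lip_step sl true); auto. lia.
      + rewrite (hom_inv _ _ g Hg), Hgt. simpl. eapply Nat.le_trans. apply (lip_step sl false); auto. lia. }
  exists SH, SG. split; [auto|split; [|split; [auto|]]].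
  - split.
    + intros s Hs. apply in_app_or in Hs as [Hs|[<-|[<-|[]]]]; apply in_or_app.
      * apply in_map_iff in Hs as [z [<- Hz]].
        left. rewrite <- (hom_inv _ _ i Hi). apply in_map. apply (proj1 GH); auto.
      * right. simpl; auto.
      * right. rewrite inv_inv. simpl; auto.
    + set (W := fun x : G => exists w, word_in SG w /\ wprod w = x).
      apply (hom12_all G W).
      { exists []. split; auto. intros x []. }
      assert (Wi : forall h y, W y -> W (gmul (i h) y)) by (apply (W_mul G H i SH SG); auto).
      assert (Wt : forall u y, In u SG -> W y -> W (gmul u y)).
      { intros u y Hu [w [Ww Ew]]. exists (u :: w). split; simpl.
        intros z [<-|Hz]; auto. rewrite Ew; auto. }
      assert (Hp : is_hom (fun h => hom1 G (i h))) by (apply hom_comp; auto; apply hom1_hom).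
      assert (Hpq : forall f, gmul (gmul (hom1 G t) (hom1 G (i (a f)))) (ginv (hom1 G t)) = hom1 G (i (b f))).
      { intro f. rewrite <- Hrel, !(hom1_hom G), (hom_inv _ _ _ (hom1_hom G)). auto. }
      apply (proj2 (UP (perm_group (G * bool)) _ _ Hp Hpq)); auto.
      * apply hom1_hom.
      * unfold hom2. apply act_perm_hom.
      * intro h. apply hom2_gen. apply Wi. rewrite <- (hom_inv _ _ i Hi). apply Wi.
      * apply hom2_gen; intros y Hy; apply Wt; auto; apply in_or_app; right; simpl; auto.
  - apply finish; auto.
    intros h w W E. pose proof (Bound w W) as Bw. rewrite E, Hgi in Bw. simpl in Bw.
    unfold actHH in Bw. simpl in Bw. rewrite decT in Bw by exact I.
    unfold cH in Bw; simpl in Bw. rewrite gmul1r in Bw. exact Bw.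
Qed.


Theorem lemma3p2 (G H : group) (i : H -> G) :
  finitely_generated G -> finitely_generated H ->
  ((exists (K F : group) (j : K -> G) (a : F -> H) (b : F -> K),
       is_hom a /\ is_hom b /\ injective a /\ injective b /\
       finite_group F /\ finitely_generated K /\ is_amalgam G H K F i j a b)
   \/
   (exists (F : group) (t : G) (a b : F -> H),
       is_hom a /\ is_hom b /\ injective a /\ injective b /\
       finite_group F /\ is_HNN G H F i t a b)) ->
  exists (SH : list H) (SG : list G),
    gen_set H SH /\ gen_set G SG /\ (forall s, In s SH -> In (i s) SG) /\
    forall (h1 h2 : H) (n : nat),
      word_dist H SH h1 h2 n <-> word_dist G SG (i h1) (i h2) n.
Proof.
  intros _ HH [[K [F [j [a [b [Ha [Hb [ia [ib [HF [HK Ham]]]]]]]]]]] | [F [t [a [b [Ha [Hb [ia [ib [HF HN]]]]]]]]]].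
  - exact (amalgam_case G H K F i j a b HH Ha Hb ia ib HF HK Ham).
  - exact (HNN_case G H F i t a b HH Ha Hb ia ib HF HN).
Qed.
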